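(* Let $N\ge1$ and $j\in\{1,\dots,N\}$. For non-negative SNRs define $$h_j=\mathsf{SNR}_{s,j}+\frac{\mathsf{SNR}_{r,j}\,\mathsf{SNR}_{s,r}}{\mathsf{SNR}_{s,j}+\mathsf{SNR}_{r,j}+\mathsf{SNR}_{s,r}+1}.$$ Then for each fixed $\mathsf{SNR}_{s,j}\ge0$, $h_j$ is quasi-concave as a function of $(\mathsf{SNR}_{r,j},\mathsf{SNR}_{s,r})\in[0,\infty)^2$.
   Context: $h_j$ is the effective SNR at destination $j$ of a quantize-forward scheme in a real AWGN multicast relay channel with source $s$, relay $r$, destinations $1,\dots,N$ and link SNRs $\mathsf{SNR}_{u,v}\ge0$. A function $F$ on a convex set is quasi-concave if $F(\lambda x_1+(1-\lambda)x_2)\ge\min(F(x_1),F(x_2))$ for all $x_1,x_2$ and $\lambda\in[0,1]$. *)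

(* Defs.v *)
From mathcomp Require Import all_boot all_order all_algebra.
Set Implicit Arguments. Unset Strict Implicit. Unset Printing Implicit Defensive.
Import Order.TTheory GRing.Theory Num.Theory.
Local Open Scope ring_scope.

Definition hj {R : realFieldType} (snr_sj snr_rj snr_sr : R) : R :=
  snr_sj + snr_rj * snr_sr / (snr_sj + snr_rj + snr_sr + 1).

Definition quasi_concave_on {R : realFieldType} (D : R * R -> Prop)
  (F : R * R -> R) : Prop :=
  forall x1 x2 : R * R, D x1 -> D x2 -> forall lam : R, 0 <= lam <= 1 ->
    Num.min (F x1) (F x2) <=
    F (lam * x1.1 + (1 - lam) * x2.1, lam * x1.2 + (1 - lam) * x2.2).

Definition nonneg_quadrant {R : realFieldType} (x : R * R) : Prop :=
  0 <= x.1 /\ 0 <= x.2.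

(* Main.v *)
Require Import Defs.
From mathcomp Require Import all_boot all_order all_algebra.
From mathcomp Require Import ring lra.
Import Order.TTheory GRing.Theory Num.Theory.
Local Open Scope ring_scope.

Lemma pos_uv (R : realFieldType) (a b c t : R) : 0 <= a -> 0 <= b -> 0 < c -> 0 < t ->
  t * (a + b + c) <= a * b -> t < a /\ t < b.
Proof.
move=> ha hb hc ht h; split.
  rewrite ltNge; apply/negP => hat.
  have : a * b <= t * b by apply: ler_wpM2r.
  nra.
rewrite ltNge; apply/negP => hbt.
have : a * b <= a * t by apply: ler_wpM2l.
nra.
Qed.

Lemma key (R : realFieldType) (u1 v1 u2 v2 K l : R) : 0 < u1 -> 0 < v1 -> 0 < u2 -> 0 < v2 ->
  0 < K -> K <= u1 * v1 -> K <= u2 * v2 -> 0 <= l <= 1 ->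
  K <= (l * u1 + (1 - l) * u2) * (l * v1 + (1 - l) * v2).
Proof.
move=> h1 h2 h3 h4 hK e1 e2 /andP[l0 l1].
have hs : 2 * K <= u1 * v2 + u2 * v1.
  have q : 4 * K * K <= (u1 * v2 + u2 * v1) ^+ 2.
    have : 4 * (u1 * v1) * (u2 * v2) <= (u1 * v2 + u2 * v1) ^+ 2.
      have := sqr_ge0 (u1 * v2 - u2 * v1). rewrite !expr2. nra.
    have : K * K <= (u1 * v1) * (u2 * v2) by apply: ler_pM; lra.
    nra.
  have p : 0 < u1 * v2 + u2 * v1 by rewrite addr_gt0 // mulr_gt0.
  rewrite expr2 in q. nra.
have hl : 0 <= l * (1 - l) by apply: mulr_ge0; lra.
have : K * (l * l) <= u1 * v1 * (l * l) by apply: ler_wpM2r; nra.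
have : K * ((1-l) * (1-l)) <= u2 * v2 * ((1-l)*(1-l)) by apply: ler_wpM2r; nra.
have : 2 * K * (l * (1 - l)) <= (u1 * v2 + u2 * v1) * (l * (1 - l)) by apply: ler_wpM2r.
nra.
Qed.

Lemma hj_ge (R : realFieldType) (s a b t : R) : 0 <= s -> 0 <= a -> 0 <= b ->
  (t <= hj s a b) = ((t - s) * (s + a + b + 1) <= a * b).
Proof.
move=> hs ha hb; rewrite /hj -lerBlDl ler_pdivlMr //; lra.
Qed.

Theorem lemma2 (R : realFieldType) (N : nat) (j : 'I_N) (snr_sj : R) :
  (0 < N)%N -> 0 <= snr_sj ->
  quasi_concave_on nonneg_quadrant
    (fun x : R * R => hj snr_sj x.1 x.2).
Proof.
move=> _ hs [a1 b1] [a2 b2] [/= ha1 hb1] [/= ha2 hb2] lam /andP[l0 l1] /=.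
set m := Num.min _ _.
have e1 : m <= hj snr_sj a1 b1 by rewrite ge_min lexx.
have e2 : m <= hj snr_sj a2 b2 by rewrite ge_min lexx orbT.
have ha : 0 <= lam * a1 + (1 - lam) * a2 by apply: addr_ge0; apply: mulr_ge0; lra.
have hb : 0 <= lam * b1 + (1 - lam) * b2 by apply: addr_ge0; apply: mulr_ge0; lra.
rewrite hj_ge //.
rewrite hj_ge // in e1; rewrite hj_ge // in e2.
set t := m - snr_sj in e1 e2 *.
have [tle|tgt] := lerP t 0.
  have : t * (snr_sj + (lam * a1 + (1 - lam) * a2) + (lam * b1 + (1 - lam) * b2) + 1) <= 0.
    by apply: mulr_le0_ge0 => //; lra.
  move=> h; apply: le_trans h _; exact: mulr_ge0.
set c := snr_sj + 1.
have hc : 0 < c by rewrite /c; lra.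
have f1 : t * (a1 + b1 + c) <= a1 * b1 by move: e1; rewrite /c; congr (_ <= _); ring.
have f2 : t * (a2 + b2 + c) <= a2 * b2 by move: e2; rewrite /c; congr (_ <= _); ring.
have [p1 q1] := @pos_uv _ a1 b1 c t ha1 hb1 hc tgt f1.
have [p2 q2] := @pos_uv _ a2 b2 c t ha2 hb2 hc tgt f2.
have hK : 0 < t * t + t * c by apply: addr_gt0; apply: mulr_gt0.
have := @key _ (a1 - t) (b1 - t) (a2 - t) (b2 - t) (t * t + t * c) lam.
rewrite !subr_gt0 => /(_ p1 q1 p2 q2 hK).
have g1 : t * t + t * c <= (a1 - t) * (b1 - t) by nra.
have g2 : t * t + t * c <= (a2 - t) * (b2 - t) by nra.
move=> /(_ g1 g2); rewrite l0 l1 => /(_ isT) h.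
rewrite /c in h; nra.
Qed.
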